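(* Let $C_{(\mathcal T,\Psi_{\mathcal T})}$ be a nested Archimedean copula with regularly varying generators, with tree $\mathcal T$ and generators $\psi_v\in\Psi_\infty$, regularly varying with index $-\alpha_v$, $\alpha_v>0$, $v\in\mathcal I$. Recursively define, for $v\in\mathcal V$, $$\Lambda_v(\bm x_{\mathrm{le}(v)})=\begin{cases}x_v,& v\in\mathcal L,\\ \left(\sum_{w\in\mathrm{ch}(v)}\Lambda_w(\bm x_{\mathrm{le}(w)})^{-1/\alpha_v}\right)^{-\alpha_v},& v\in\mathcal I.\end{cases}$$ Then for every $v\in\mathcal V$, the copula $C_v$ admits the tail copula $\Lambda(\cdot;C_v)=\Lambda_v(\cdot)$ on $(0,\infty)^{d(v)}$.
   Context: An Archimedean generator is a continuous, decreasing $\psi:[0,\infty)\to[0,1]$ with $\psi(0)=1$, $\lim_{t\to\infty}\psi(t)=0$, strictly decreasing on $[0,\inf\{t:\psi(t)=0\}]$, with inverse $\psi^{-1}$ ($\psi^{-1}(0)=\inf\{t:\psi(t)=0\}$); $\Psi_\infty$ is the set of completely monotone ones ($(-1)^k\psi^{(k)}\ge0$ for all $k$). $f:(0,\infty)\to(0,\infty)$ is regularly varying with index $\rho$ if $\lim_{x\to\infty}f(tx)/f(x)=t^\rho$ for all $t>0$. Let $\mathcal T=(\mathcal V,\mathcal E)$ be a rooted tree with root $r$, leaf set $\mathcal L=\{1,\dots,d\}$, internal vertices $\mathcal I=\mathcal V\setminus\mathcal L$; $\mathrm{pa}(v)$ is the parent of $v$, $\mathrm{ch}(v)$ the set of children,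 $\mathrm{le}(v)$ the set of leaves of the subtree rooted at $v$ (with $\mathrm{le}(v)=\{v\}$ for leaves), $d(v)=|\mathrm{le}(v)|$. Given generators $\Psi_{\mathcal T}=\{\psi_v\}_{v\in\mathcal I}\subseteq\Psi_\infty$, recursively set $C_v(\bm u_{\mathrm{le}(v)})=u_v$ for $v\in\mathcal L$ and $C_v(\bm u_{\mathrm{le}(v)})=\psi_v\left(\sum_{w\in\mathrm{ch}(v)}\psi_v^{-1}(C_w(\bm u_{\mathrm{le}(w)}))\right)$ for $v\in\mathcal I$; the nested Archimedean copula is $C_{(\mathcal T,\Psi_{\mathcal T})}=C_r$. It is assumed that the sufficient nesting condition holds: $(\psi_{\mathrm{pa}(v)}^{-1}\circ\psi_v)'$ is completely monotone for every $v\in\mathcal I\setminus\{r\}$. It has regularly varying generators if each $\psi_v$, $v\in\mathcal I$, is regularly varying with index $-\alpha_v$ for some $\alpha_v>0$. The tail copula of a copula $C$ in dimension $k$ is $\Lambda(\bm x;C)=\lim_{t\downarrow0}C(t\bm x)/t$, $\bm x\in(0,\infty)^k$. *)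

(* Defs.v *)
From Stdlib Require Import Reals Lra List ClassicalEpsilon Permutation.
From Coquelicot Require Import Coquelicot.
Open Scope R_scope.

(** Archimedean generator psi : [0,oo) -> [0,1] (values outside [0,oo) are irrelevant). *)
Definition is_generator (psi : R -> R) : Prop :=
  (forall t, 0 < t -> continuous psi t) /\
  filterlim psi (at_right 0) (locally (psi 0)) /\
  (forall t, 0 <= t -> 0 <= psi t <= 1) /\
  (forall s t, 0 <= s -> s <= t -> psi t <= psi s) /\
  psi 0 = 1 /\
  is_lim psi p_infty (Finite 0) /\
  (* strictly decreasing on [0, inf {t : psi t = 0}] (inf of the empty set = +oo) *)
  (forall s t, 0 <= s -> s < t ->
     (forall z, 0 <= z -> psi z = 0 -> t <= z) -> psi t < psi s).

(** Inverse of a generator: the (unique, for u in (0,1]) t >= 0 with psi t = u.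
    For completely monotone generators psi > 0, so psi^{-1}(0) = +oo in the paper;
    here psi^{-1}(0) is an unspecified real (irrelevant for tail copulas). *)
Definition ginv (psi : R -> R) (u : R) : R :=
  epsilon (inhabits 0) (fun t => 0 <= t /\ psi t = u).

Definition completely_monotone (f : R -> R) : Prop :=
  forall (k : nat) (t : R), 0 < t ->
    ex_derive_n f k t /\ 0 <= (-1) ^ k * Derive_n f k t.

Definition regularly_varying (f : R -> R) (rho : R) : Prop :=
  (forall x, 0 < x -> 0 < f x) /\
  forall t, 0 < t ->
    is_lim (fun x => f (t * x) / f x) p_infty (Finite (Rpower t rho)).

Definition nesting_condition (psi_p psi_c : R -> R) : Prop :=
  (forall t, 0 < t -> ex_derive (fun s => ginv psi_p (psi_c s)) t) /\
  completely_monotone (Derive (fun s => ginv psi_p (psi_c s))).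

Inductive tree : Type :=
  | Leaf (i : nat)
  | Node (psi : R -> R) (alpha : R) (ch : list tree).

(** Vertices of a tree = subtrees rooted at them. [subtree s T]: s is the subtree
    rooted at some vertex of T. *)
Inductive subtree : tree -> tree -> Prop :=
  | subtree_refl T : subtree T T
  | subtree_child s c psi a ch : In c ch -> subtree s c -> subtree s (Node psi a ch).

Fixpoint leaves (T : tree) : list nat :=
  match T with
  | Leaf i => i :: nil
  | Node _ _ ch =>
      (fix go (l : list tree) : list nat :=
         match l with nil => nil | c :: l' => leaves c ++ go l' end) ch
  end.

Fixpoint nac (T : tree) (u : nat -> R) : R :=
  match T with
  | Leaf i => u i
  | Node psi _ ch =>
      psi ((fix go (l : list tree) : R :=
              match l with nil => 0 | c :: l' => ginv psi (nac c u) + go l' end) ch)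
  end.

Fixpoint tailL (T : tree) (x : nat -> R) : R :=
  match T with
  | Leaf i => x i
  | Node _ a ch =>
      Rpower ((fix go (l : list tree) : R :=
                 match l with
                 | nil => 0
                 | c :: l' => Rpower (tailL c x) (- / a) + go l' end) ch) (- a)
  end.

Definition has_tail_value (C : (nat -> R) -> R) (x : nat -> R) (L : R) : Prop :=
  filterlim (fun t => C (fun i => t * x i) / t) (at_right 0) (locally L).

Definition NAC_regvar (d : nat) (T : tree) : Prop :=
  Permutation (leaves T) (seq 1 d) /\
  forall psi a ch, subtree (Node psi a ch) T ->
    ch <> nil /\
    is_generator psi /\ completely_monotone psi /\
    0 < a /\ regularly_varying psi (- a) /\
    (forall psi' a' ch', In (Node psi' a' ch') ch -> nesting_condition psi psi').

(* Main.v *)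
Require Import Defs.
From Stdlib Require Import Reals List Lra ClassicalEpsilon.
From Coquelicot Require Import Coquelicot.
Open Scope R_scope.

Lemma lim_eps (F : (R -> Prop) -> Prop) {FF : Filter F} (f : R -> R) (l : R) :
  (forall eps, 0 < eps -> F (fun t => Rabs (f t - l) < eps)) -> filterlim f F (locally l).
Proof.
  intros H. apply filterlim_locally. intros [e He]. simpl.
  apply (filter_imp _ _ (fun t Ht => Ht) (H e He)).
Qed.

Lemma eps_lim (F : (R -> Prop) -> Prop) {FF : Filter F} (f : R -> R) (l : R) :
  filterlim f F (locally l) -> forall eps, 0 < eps -> F (fun t => Rabs (f t - l) < eps).
Proof.
  intros H eps He. rewrite filterlim_locally in H.
  exact (H (mkposreal eps He)).
Qed.

Lemma ev_right (P : R -> Prop) (c : R) : 0 < c -> (forall t, 0 < t < c -> P t) -> at_right 0 P.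
Proof.
  intros Hc H. exists (mkposreal c Hc). intros y Hy Hy0. apply H.
  change (Rabs (y - 0) < c) in Hy. rewrite Rminus_0_r, Rabs_right in Hy; lra.
Qed.

Lemma inlim_infty (f : R -> R) (l : R) : is_lim f p_infty (Finite l) ->
  forall eps, 0 < eps -> exists M, forall x, M < x -> Rabs (f x - l) < eps.
Proof.
  intros H eps He.
  change (filterlim f (Rbar_locally p_infty) (locally l)) in H.
  exact (eps_lim _ f l H eps He).
Qed.

Lemma rp_one a : Rpower 1 a = 1.
Proof. unfold Rpower. rewrite ln_1, Rmult_0_r. apply exp_0. Qed.

Lemma rp_pos c a : 0 < Rpower c a.
Proof. apply exp_pos. Qed.

Lemma rp_lt1 c a : 1 < c -> 0 < a -> Rpower c (- a) < 1.
Proof.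
  intros Hc Ha. unfold Rpower. rewrite <- exp_0. apply exp_increasing.
  assert (0 < ln c). { rewrite <- ln_1. apply ln_increasing; lra. } nra.
Qed.

Lemma rp_gt1 c a : 0 < c < 1 -> 0 < a -> 1 < Rpower c (- a).
Proof.
  intros Hc Ha. unfold Rpower. rewrite <- exp_0. apply exp_increasing.
  assert (ln c < 0). { rewrite <- ln_1. apply ln_increasing; lra. } nra.
Qed.

Definition good (psi : R -> R) (a : R) :=
  is_generator psi /\ regularly_varying psi (- a) /\ 0 < a.

Section Psi.
Variables (psi : R -> R) (a : R).
Hypothesis Hgood : good psi a.

Lemma psi0 : psi 0 = 1.
Proof. destruct Hgood as [(_&_&_&_&H&_) _]. exact H. Qed.

Lemma psi_pos t : 0 <= t -> 0 < psi t.
Proof.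
  intros Ht. destruct (Req_dec t 0) as [->|Hn].
  - rewrite psi0; lra.
  - destruct Hgood as [_ [[H _] _]]. apply H; lra.
Qed.

Lemma psi_le1 t : 0 <= t -> psi t <= 1.
Proof. intros Ht. destruct Hgood as [(_&_&H&_) _]. apply H; auto. Qed.

Lemma psi_dec s t : 0 <= s -> s <= t -> psi t <= psi s.
Proof. intros Hs Hst. destruct Hgood as [(_&_&_&Hd&_) _]. apply Hd; auto. Qed.

Lemma psi_sdec s t : 0 <= s -> s < t -> psi t < psi s.
Proof.
  intros Hs Hst. destruct Hgood as [(_&_&_&_&_&_&Hd) _]. apply Hd; auto.
  intros z Hz Hpz. pose proof (psi_pos z Hz). lra.
Qed.

Lemma ginv_ex u : 0 < u <= 1 -> exists t, 0 <= t /\ psi t = u.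
Proof.
  intros Hu. destruct (Req_dec u 1) as [->|Hn].
  { exists 0. split; [lra| apply psi0]. }
  destruct Hgood as [(Hc&Hr&_&_&_&Hl&_) _].
  pose proof (eps_lim _ psi (psi 0) Hr (1 - u) ltac:(lra)) as [[d Hd] Hs].
  set (s := d / 2).
  assert (Hs' : Rabs (psi s - psi 0) < 1 - u).
  { apply Hs. change (Rabs (s - 0) < d). unfold s. rewrite Rminus_0_r, Rabs_right; lra.
    unfold s; simpl; lra. }
  rewrite psi0 in Hs'. apply Rabs_def2 in Hs'.
  assert (s > 0) by (unfold s; simpl; lra).
  destruct (inlim_infty psi 0 Hl u ltac:(lra)) as [M HM].
  set (b := Rmax M s + 1).
  assert (Hb : Rabs (psi b - 0) < u) by (apply HM; unfold b; pose proof (Rmax_l M s); lra).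
  apply Rabs_def2 in Hb.
  assert (s < b) by (unfold b; pose proof (Rmax_r M s); lra).
  destruct (IVT_Rbar_decr psi (Finite s) (Finite b) (Finite (psi s)) (Finite (psi b)) u)
    as [z [Hz1 [Hz2 Hz3]]].
  - apply is_lim_continuity. apply continuity_pt_filterlim. apply Hc; lra.
  - apply is_lim_continuity. apply continuity_pt_filterlim. apply Hc; lra.
  - intros z Hz1 Hz2. apply continuity_pt_filterlim. apply Hc. simpl in Hz1. lra.
  - simpl; lra.
  - simpl; split; lra.
  - exists z. simpl in Hz1. split; [lra|auto].
Qed.

Lemma ginv_spec u : 0 < u <= 1 -> 0 <= ginv psi u /\ psi (ginv psi u) = u.
Proof.
  intros Hu. unfold ginv. apply (epsilon_spec (inhabits 0) (fun t => 0 <= t /\ psi t = u)).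
  apply ginv_ex; auto.
Qed.

Lemma psi_inj s t : 0 <= s -> 0 <= t -> psi s = psi t -> s = t.
Proof.
  intros Hs Ht He. destruct (Rtotal_order s t) as [H|[H|H]]; auto.
  - pose proof (psi_sdec s t Hs H). lra.
  - pose proof (psi_sdec t s Ht H). lra.
Qed.

Lemma ginv_psi s : 0 <= s -> ginv psi (psi s) = s.
Proof.
  intros Hs. destruct (ginv_spec (psi s)) as [H1 H2].
  { split; [apply psi_pos|apply psi_le1]; auto. }
  apply psi_inj; auto.
Qed.

Lemma ginv_anti u v : 0 < u -> u <= v -> v <= 1 -> ginv psi v <= ginv psi u.
Proof.
  intros. destruct (ginv_spec u) as [Hu1 Hu2]; [lra|].
  destruct (ginv_spec v) as [Hv1 Hv2]; [lra|].
  destruct (Rle_or_lt (ginv psi v) (ginv psi u)) as [Hc|Hc]; auto.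
  pose proof (psi_sdec _ _ Hu1 Hc). lra.
Qed.

Lemma ginv_big M : at_right 0 (fun t => M < ginv psi t).
Proof.
  set (M' := Rmax M 0).
  assert (HM : 0 <= M') by apply Rmax_r.
  pose proof (psi_pos M' HM). pose proof (psi_le1 M' HM).
  apply (ev_right _ (psi M')); auto. intros t Ht.
  destruct (ginv_spec t) as [H1 H2]; [lra|].
  destruct (Rle_or_lt (ginv psi t) M') as [H3|H3].
  - pose proof (psi_dec _ _ H1 H3). lra.
  - pose proof (Rmax_l M 0). unfold M' in *. lra.
Qed.

Lemma Glim lam : 0 < lam -> forall eps, 0 < eps ->
  at_right 0 (fun t => Rabs (psi (lam * ginv psi t) / t - Rpower lam (- a)) < eps).
Proof.
  intros Hl eps He. destruct Hgood as [_ [[_ Hr] _]].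
  destruct (inlim_infty _ _ (Hr lam Hl) eps He) as [M HM].
  apply (filter_imp (fun t => M < ginv psi t /\ 0 < t < 1)).
  2: { apply filter_and. apply ginv_big. apply (ev_right _ 1); auto; lra. }
  intros t [H1 H2]. destruct (ginv_spec t) as [_ H3]; [lra|].
  specialize (HM _ H1). rewrite H3 in HM. exact HM.
Qed.

Lemma child_bounds (f : R -> R) (L eta : R) : 0 < L -> 0 < eta < 1 ->
  filterlim (fun t => f t / t) (at_right 0) (locally L) ->
  at_right 0 (fun t => 0 < f t <= 1) ->
  at_right 0 (fun t => Rpower L (- / a) * (1 - eta) * ginv psi t <= ginv psi (f t)
                       <= Rpower L (- / a) * (1 + eta) * ginv psi t).
Proof.
  intros HL He Hlim Hf.
  assert (Ha : 0 < a) by (destruct Hgood as [_ [_ H]]; exact H).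
  set (mu := Rpower L (- / a)).
  assert (Hmu : 0 < mu) by apply rp_pos.
  assert (Hmua : Rpower mu (- a) = L).
  { unfold mu. rewrite Rpower_mult. replace (- / a * - a) with 1 by (field; lra).
    apply Rpower_1; auto. }
  set (p1 := Rpower (1 + eta) (- a)). set (p2 := Rpower (1 - eta) (- a)).
  assert (Hp1 : p1 < 1) by (apply rp_lt1; lra).
  assert (Hp2 : 1 < p2) by (apply rp_gt1; lra).
  assert (Hp1' : 0 < p1) by apply rp_pos.
  assert (E1 : Rpower (mu * (1 + eta)) (- a) = L * p1).
  { rewrite <- Rpower_mult_distr by lra. rewrite Hmua. reflexivity. }
  assert (E2 : Rpower (mu * (1 - eta)) (- a) = L * p2).
  { rewrite <- Rpower_mult_distr by lra. rewrite Hmua. reflexivity. }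
  set (e1 := L * (1 - p1) / 2). set (e2 := L * (p2 - 1) / 2).
  assert (He1 : 0 < e1) by (unfold e1; nra).
  assert (He2 : 0 < e2) by (unfold e2; nra).
  pose proof (Glim (mu * (1 + eta)) ltac:(nra) e1 He1) as G1.
  pose proof (Glim (mu * (1 - eta)) ltac:(nra) e2 He2) as G2.
  pose proof (eps_lim _ _ _ Hlim (Rmin e1 e2) ltac:(apply Rmin_glb_lt; auto)) as G3.
  pose proof (ev_right (fun t => 0 < t < 1) 1 Rlt_0_1 (fun t H => H)) as G4.
  generalize (filter_and _ _ G1 (filter_and _ _ G2 (filter_and _ _ G3 (filter_and _ _ G4 Hf)))).
  apply filter_imp. intros t (H1 & H2 & H3 & H4 & H5).
  rewrite E1 in H1. rewrite E2 in H2.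
  destruct (ginv_spec t) as [Hg0 Hg1]; [lra|].
  set (g := ginv psi t) in *.
  apply Rabs_def2 in H1. apply Rabs_def2 in H2. apply Rabs_def2 in H3.
  pose proof (Rmin_l e1 e2). pose proof (Rmin_r e1 e2).
  assert (Hg1' : 0 <= mu * (1 + eta) * g) by (apply Rmult_le_pos; nra).
  assert (Hg2' : 0 <= mu * (1 - eta) * g) by (apply Rmult_le_pos; nra).
  assert (Ht : 0 < / t) by (apply Rinv_0_lt_compat; lra).
  split.
  - assert (Hlt : f t < psi (mu * (1 - eta) * g)).
    { apply (Rmult_lt_reg_r (/ t)); auto. unfold Rdiv in *.
      unfold e2 in *. nra. }
    rewrite <- (ginv_psi (mu * (1 - eta) * g)) at 1 by auto.
    apply ginv_anti; try lra. apply psi_le1; auto.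
  - assert (Hlt : psi (mu * (1 + eta) * g) < f t).
    { apply (Rmult_lt_reg_r (/ t)); auto. unfold Rdiv in *.
      unfold e1 in *. nra. }
    rewrite <- (ginv_psi (mu * (1 + eta) * g)) by auto.
    apply ginv_anti; try lra. apply psi_pos; auto.
Qed.

End Psi.

Fixpoint sumf (psi : R -> R) (fs : list ((R -> R) * R)) (t : R) : R :=
  match fs with nil => 0 | p :: l => ginv psi (fst p t) + sumf psi l t end.
Fixpoint sumL (a : R) (fs : list ((R -> R) * R)) : R :=
  match fs with nil => 0 | p :: l => Rpower (snd p) (- / a) + sumL a l end.

Definition child_ok (p : (R -> R) * R) :=
  0 < snd p /\ filterlim (fun t => fst p t / t) (at_right 0) (locally (snd p)) /\
  at_right 0 (fun t => 0 < fst p t <= 1).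

Lemma sumL_nonneg a fs : 0 <= sumL a fs.
Proof. induction fs; simpl; [lra|]. pose proof (rp_pos (snd a0) (- / a)). lra. Qed.

Lemma sumL_pos a fs : fs <> nil -> 0 < sumL a fs.
Proof.
  destruct fs as [|p l]; [congruence|]. intros _. simpl.
  pose proof (rp_pos (snd p) (- / a)). pose proof (sumL_nonneg a l). lra.
Qed.

Lemma sum_bounds psi a (Hg : good psi a) fs eta : 0 < eta < 1 ->
  (forall p, In p fs -> child_ok p) ->
  at_right 0 (fun t => sumL a fs * (1 - eta) * ginv psi t <= sumf psi fs t
                       <= sumL a fs * (1 + eta) * ginv psi t).
Proof.
  intros He Hfs. induction fs as [|p l IH].
  - simpl. apply filter_forall. intros t. rewrite !Rmult_0_l. lra.
  - destruct (Hfs p (or_introl eq_refl)) as (H1 & H2 & H3).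
    pose proof (child_bounds psi a Hg (fst p) (snd p) eta H1 He H2 H3) as G1.
    pose proof (IH (fun q Hq => Hfs q (or_intror Hq))) as G2.
    generalize (filter_and _ _ G1 G2).
    apply filter_imp. intros t [[A1 A2] [B1 B2]]. simpl.
    set (m := Rpower (snd p) (- / a)) in *. set (g := ginv psi t) in *.
    assert (E1 : (m + sumL a l) * (1 - eta) * g = m * (1 - eta) * g + sumL a l * (1 - eta) * g) by ring.
    assert (E2 : (m + sumL a l) * (1 + eta) * g = m * (1 + eta) * g + sumL a l * (1 + eta) * g) by ring.
    rewrite E1, E2. lra.
Qed.

Lemma node_lim psi a (Hg : good psi a) fs : fs <> nil ->
  (forall p, In p fs -> child_ok p) ->
  filterlim (fun t => psi (sumf psi fs t) / t) (at_right 0) (locally (Rpower (sumL a fs) (- a)))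
  /\ at_right 0 (fun t => 0 < psi (sumf psi fs t) <= 1).
Proof.
  intros Hn Hfs.
  assert (Ha : 0 < a) by (destruct Hg as [_ [_ H]]; exact H).
  set (S := sumL a fs). assert (HS : 0 < S) by (apply sumL_pos; auto).
  split.
  2: { pose proof (sum_bounds psi a Hg fs (1/2) ltac:(lra) Hfs) as G1.
       pose proof (ev_right (fun t => 0 < t < 1) 1 Rlt_0_1 (fun t H => H)) as G2.
       generalize (filter_and _ _ G1 G2).
       apply filter_imp. intros t [[A1 A2] A3].
       destruct (ginv_spec psi a Hg t) as [Z1 Z2]; [lra|].
       assert (0 <= S * (1 - 1/2) * ginv psi t) by (apply Rmult_le_pos; nra).
       split; [apply (psi_pos psi a Hg)|apply (psi_le1 psi a Hg)]; fold S; lra. }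
  apply (@lim_eps (at_right 0) _). intros eps Heps.
  set (K := Rpower S (- a)). assert (HK : 0 < K) by apply rp_pos.
  set (e' := eps / (2 * K)). assert (He' : 0 < e') by (unfold e'; apply Rdiv_lt_0_compat; lra).
  assert (HKe : K * e' = eps / 2) by (unfold e'; field; lra).
  assert (Hc : continuity_pt (fun c => Rpower c (- a)) 1).
  { apply derivable_continuous_pt. exact (exist _ _ (derivable_pt_lim_power 1 (- a) Rlt_0_1)). }
  destruct (Hc e' He') as [dl [Hdl Hd]].
  set (eta := Rmin (dl / 2) (1 / 2)).
  assert (Heta : 0 < eta < 1).
  { unfold eta. split. apply Rmin_glb_lt; lra. pose proof (Rmin_r (dl/2) (1/2)); lra. }
  assert (Heta2 : eta < dl) by (unfold eta; pose proof (Rmin_l (dl/2) (1/2)); lra).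
  set (p1 := Rpower (1 + eta) (- a)). set (p2 := Rpower (1 - eta) (- a)).
  assert (Hp1 : Rabs (p1 - 1) < e').
  { assert (H := Hd (1 + eta)). simpl in H. unfold R_dist in H. rewrite rp_one in H.
    apply H. split. split; [exact I| lra]. replace (1 + eta - 1) with eta by ring.
    rewrite Rabs_right; lra. }
  assert (Hp2 : Rabs (p2 - 1) < e').
  { assert (H := Hd (1 - eta)). simpl in H. unfold R_dist in H. rewrite rp_one in H.
    apply H. split. split; [exact I| lra]. replace (1 - eta - 1) with (- eta) by ring.
    rewrite Rabs_Ropp, Rabs_right; lra. }
  assert (E1 : Rpower (S * (1 + eta)) (- a) = K * p1).
  { rewrite <- Rpower_mult_distr by lra. reflexivity. }
  assert (E2 : Rpower (S * (1 - eta)) (- a) = K * p2).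
  { rewrite <- Rpower_mult_distr by lra. reflexivity. }
  pose proof (Glim psi a Hg (S * (1 + eta)) ltac:(nra) (eps / 2) ltac:(lra)) as G1.
  pose proof (Glim psi a Hg (S * (1 - eta)) ltac:(nra) (eps / 2) ltac:(lra)) as G2.
  pose proof (sum_bounds psi a Hg fs eta Heta Hfs) as G3.
  pose proof (ev_right (fun t => 0 < t < 1) 1 Rlt_0_1 (fun t H => H)) as G4.
  generalize (filter_and _ _ G1 (filter_and _ _ G2 (filter_and _ _ G3 G4))).
  apply filter_imp. intros t (H1 & H2 & [H3 H3'] & H4). fold S in H3, H3'.
  rewrite E1 in H1. rewrite E2 in H2.
  destruct (ginv_spec psi a Hg t) as [Hg0 Hg1]; [lra|].
  set (g := ginv psi t) in *.
  assert (Hb1 : 0 <= S * (1 - eta) * g) by (apply Rmult_le_pos; nra).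
  pose proof (psi_dec psi a Hg _ _ Hb1 H3) as D1.
  pose proof (psi_dec psi a Hg (sumf psi fs t) _ ltac:(lra) H3') as D2.
  assert (Ht : 0 < / t) by (apply Rinv_0_lt_compat; lra).
  apply Rabs_def2 in H1. apply Rabs_def2 in H2. apply Rabs_def2 in Hp1. apply Rabs_def2 in Hp2.
  assert (Q1 : psi (S * (1 + eta) * g) / t <= psi (sumf psi fs t) / t).
  { unfold Rdiv. apply Rmult_le_compat_r; lra. }
  assert (Q2 : psi (sumf psi fs t) / t <= psi (S * (1 - eta) * g) / t).
  { unfold Rdiv. apply Rmult_le_compat_r; lra. }
  apply Rabs_def1; nra.
Qed.

Definition tree_ind' (P : tree -> Prop) (HL : forall i, P (Leaf i))
  (HN : forall psi a ch, (forall c, In c ch -> P c) -> P (Node psi a ch)) : forall t, P t :=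
  fix IH t := match t with
  | Leaf i => HL i
  | Node psi a ch => HN psi a ch
      ((fix go (l : list tree) : forall c, In c l -> P c :=
          match l with
          | nil => fun c H => False_ind _ H
          | c0 :: l' => fun c H => match H with
                                  | or_introl e => eq_ind c0 P (IH c0) c e
                                  | or_intror H' => go l' c H'
                                  end
          end) ch)
  end.

Lemma subtree_trans s t u : subtree s t -> subtree t u -> subtree s u.
Proof.
  intros H1 H2. induction H2; auto. eapply subtree_child; eauto.
Qed.

Lemma leaves_child psi a ch c i : In c ch -> In i (leaves c) -> In i (leaves (Node psi a ch)).
Proof.
  intros Hc Hi. simpl. induction ch as [|c0 l IH]; [destruct Hc|].
  apply in_or_app. destruct Hc as [->|Hc]; [left; auto | right; auto].
Qed.

Definition mk (ch : list tree) (x : nat -> R) : list ((R -> R) * R) :=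
  map (fun c => ((fun t => nac c (fun i => t * x i)), tailL c x)) ch.

Lemma nac_node psi a ch x t :
  nac (Node psi a ch) (fun i => t * x i) = psi (sumf psi (mk ch x) t).
Proof.
  simpl. f_equal. induction ch as [|c l IH]; simpl; [reflexivity|]. rewrite IH. reflexivity.
Qed.

Lemma tailL_node psi a ch x : tailL (Node psi a ch) x = Rpower (sumL a (mk ch x)) (- a).
Proof.
  simpl. f_equal. induction ch as [|c l IH]; simpl; [reflexivity|]. rewrite IH. reflexivity.
Qed.

Theorem proposition4p5 (d : nat) (T : tree) :
  NAC_regvar d T ->
  forall v : tree, subtree v T ->
  forall x : nat -> R, (forall i, In i (leaves v) -> 0 < x i) ->
    has_tail_value (nac v) x (tailL v x).
Proof.
  intros [_ HN].
  enough (Hall : forall v, subtree v T -> forall x, (forall i, In i (leaves v) -> 0 < x i) ->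
     has_tail_value (nac v) x (tailL v x) /\ 0 < tailL v x /\
     at_right 0 (fun t => 0 < nac v (fun i => t * x i) <= 1)).
  { intros v Hv x Hx. apply Hall; auto. }
  apply (tree_ind' (fun v => subtree v T -> forall x, (forall i, In i (leaves v) -> 0 < x i) ->
     has_tail_value (nac v) x (tailL v x) /\ 0 < tailL v x /\
     at_right 0 (fun t => 0 < nac v (fun i => t * x i) <= 1))).
  - intros i Hv x Hx. assert (Hxi : 0 < x i) by (apply Hx; simpl; auto).
    simpl. split; [|split; auto].
    + unfold has_tail_value. simpl. apply (@lim_eps (at_right 0) _). intros eps He.
      apply (ev_right _ 1 Rlt_0_1). intros t Ht.
      replace (t * x i / t - x i) with 0 by (field; lra). rewrite Rabs_R0; auto.
    + apply (ev_right _ (/ x i)). apply Rinv_0_lt_compat; auto.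
      intros t Ht. split. nra.
      assert (t * x i < / x i * x i) by nra. rewrite Rinv_l in H; lra.
  - intros psi a ch IH Hv x Hx.
    destruct (HN psi a ch Hv) as (Hne & Hgen & _ & Ha & Hrv & _).
    assert (Hg : good psi a) by exact (conj Hgen (conj Hrv Ha)).
    assert (Hfs : forall p, In p (mk ch x) -> child_ok p).
    { intros p Hp. unfold mk in Hp. apply in_map_iff in Hp. destruct Hp as [c [<- Hc]].
      assert (Hcs : subtree c T).
      { apply (subtree_trans _ (Node psi a ch)); auto.
        eapply subtree_child; eauto. apply subtree_refl. }
      destruct (IH c Hc Hcs x) as (A1 & A2 & A3).
      { intros i Hi. apply Hx. eapply leaves_child; eauto. }
      unfold child_ok. simpl. repeat split; auto. }
    assert (Hn : mk ch x <> nil) by (destruct ch; simpl; congruence).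
    destruct (node_lim psi a Hg (mk ch x) Hn Hfs) as [L1 L2].
    split; [|split].
    + unfold has_tail_value. rewrite tailL_node.
      eapply filterlim_ext; [|exact L1]. intros t. rewrite nac_node. reflexivity.
    + rewrite tailL_node. apply rp_pos.
    + eapply filter_imp; [|exact L2]. intros t Ht. rewrite nac_node. exact Ht.
Qed.
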